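(* Let $w,s,t$ be positive integers with $t\mid s$ and $t\ne s$. Let $p$ be a prime and $\alpha$ a positive integer with $p^\alpha\mid s/t$ but $p^{\alpha+1}\nmid s/t$. Assume that either $p\ne2$, or $p=2$ and $\alpha>1$. For $l\in I\big(s/(p^\alpha t)\big)$ set $$f(l)=\sum_{k\in\{p^{\alpha-1}l,\;p^{\alpha}l\}}(-1)^{\omega(s/(kt))}(-1)^{ktw}\binom{k(tw-1)-1}{k-1}.$$ Then $f(l)\equiv0\pmod{p^{2\alpha}}$ for every $l\in I\big(s/(p^\alpha t)\big)$.
   Context: For a positive integer $n$, $\omega(n)$ is the number of distinct primes dividing $n$, and $I(n)=\{k\in\mathbb{N}: k\mid n \text{ and } n/k \text{ is square-free}\}$. Binomial coefficients $\binom{n}{m}$ with $n\in\mathbb{Z}$, $m\ge0$ mean $n(n-1)\cdots(n-m+1)/m!$. *)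

(* Defs.v *)
From mathcomp Require Import all_boot all_order all_algebra.
Set Implicit Arguments. Unset Strict Implicit. Unset Printing Implicit Defensive.
Import Order.TTheory GRing.Theory Num.Theory.

Definition omega (n : nat) : nat := size (primes n).

Definition squarefree (n : nat) : Prop :=
  (0 < n)%N /\ forall d : nat, (d * d %| n)%N -> d = 1%N.

Definition inI (n k : nat) : Prop :=
  (0 < k)%N /\ (k %| n)%N /\ squarefree (n %/ k).

(* generalized binomial coefficient binom(n, m) = n(n-1)...(n-m+1)/m!, n : int
   (the division is exact). *)
Definition binz (n : int) (m : nat) : int :=
  ((\prod_(i < m) (n - (i : nat)%:Z)) %/ (m`!)%:Z)%Z.

Definition fterm (s t w k : nat) : int :=
  ((-1) ^+ omega (s %/ (k * t)) * (-1) ^+ (k * t * w)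
   * binz (k%:Z * ((t * w)%:Z - 1) - 1) k.-1)%R.

Definition fsum (s t w p a l : nat) : int :=
  (fterm s t w (p ^ a.-1 * l) + fterm s t w (p ^ a * l))%R.

(* Main.v *)
Require Import Defs.
From mathcomp Require Import all_boot all_order all_algebra.
From mathcomp Require Import zify ring.
Set Implicit Arguments. Unset Strict Implicit. Unset Printing Implicit Defensive.
Import Order.TTheory GRing.Theory Num.Theory.
Local Open Scope ring_scope.

Lemma ffact_int (n m : nat) :
  \prod_(i < m) (n%:Z - (i : nat)%:Z) = (n ^_ m)%N%:Z.
Proof.
elim: m n => [|m IH] n; first by rewrite big_ord0 ffactn0.
rewrite big_ord_recl /= subr0.
case: n => [|n]; first by rewrite mul0r ffact0n.
rewrite ffactSS PoszM -IH; congr (_ * _); apply: eq_bigr => i _.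
rewrite /bump /= add1n; lia.
Qed.

Lemma rising (x m : nat) :
  ((\prod_(i < m) (x.+1 + i)) * x`! = (x + m)`!)%N.
Proof.
elim: m => [|m IH]; first by rewrite big_ord0 mul1n addn0.
by rewrite big_ord_recr /= mulnAC IH addnS factS addSn mulnC.
Qed.


Lemma fact_dvd_prod (n : int) (m : nat) :
  ((m`!)%:Z %| \prod_(i < m) (n - (i : nat)%:Z))%Z.
Proof.
case: n => n.
  rewrite ffact_int -bin_ffact PoszM; apply/dvdzP; by exists ('C(n, m))%:Z.
rewrite NegzE.
have -> : \prod_(i < m) (- (n.+1)%:Z - (i : nat)%:Z)
   = (-1) ^+ m * (\prod_(i < m) (n.+1 + i)%N)%:Z.
  have -> : (-1) ^+ m = \prod_(i < m) (-1 : int) by rewrite prodr_const card_ord.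
  rewrite (big_morph Posz PoszM (erefl _)) -big_split /=.
  by apply: eq_bigr => i _; rewrite PoszD; ring.
have H : (\prod_(i < m) (n.+1 + i) = 'C(n + m, m) * m`!)%N.
  apply/eqP; rewrite -(eqn_pmul2r (fact_gt0 n)) rising.
  by rewrite -mulnA -(bin_fact (leq_addl n m)) addnK.
apply/dvdzP; exists ((-1) ^+ m * ('C(n + m, m))%:Z).
by rewrite H PoszM mulrA.
Qed.

Lemma binz_mul (n : int) (m : nat) :
  binz n m * (m`!)%:Z = \prod_(i < m) (n - (i : nat)%:Z).
Proof. by rewrite /binz divzK // fact_dvd_prod. Qed.

Lemma shift_prod (c : int) k :
  \prod_(i < k.-1) (c - 1 - (i : nat)%:Z) = \prod_(1 <= j < k) (c - j%:Z).
Proof.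
rewrite big_add1 big_mkord; apply: eq_bigr => i _; lia.
Qed.

Lemma fact_shift k : (0 < k)%N -> ((k.-1)`!)%:Z = \prod_(1 <= j < k) (j%:Z).
Proof.
move=> k0; rewrite fact_prod prednK // (big_morph Posz PoszM (erefl _)) //.
Qed.

Lemma mult_split (F : nat -> int) p k : (0 < p)%N ->
  \prod_(1 <= j < (p * k)%N | (p %| j)%N) F j = \prod_(1 <= i < k) F (p * i)%N.
Proof.
move=> p0; elim: k => [|k IH]; first by rewrite muln0 !big_geq.
case: k IH => [|k] IH.
  rewrite muln1 [RHS]big_geq // big_nat_cond big1 // => j /andP[/andP[lo hi] dj].
  by have := dvdn_leq lo dj; rewrite leqNgt hi.
rewrite (@big_cat_nat _ _ _ (p * k.+1)) //=; last first.
  by rewrite leq_pmul2l.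
  by rewrite muln_gt0 p0.
rewrite IH [RHS]big_nat_recr //=; congr (_ * _).
rewrite big_ltn_cond; last by rewrite ltn_pmul2l.
rewrite dvdn_mulr //= big_nat_cond big1 ?mulr1 // => j /andP[/andP[lo hi] /dvdnP [q Hq]].
move: lo hi; rewrite Hq (mulnC q p) !ltn_pmul2l //; lia.
Qed.

Definition Lp p k := [seq j <- index_iota 1 (p * k)%N | ~~ (p %| j)%N].

Lemma rev_iota1 n : rev (iota 1 n) = map (fun i => n.+1 - i)%N (iota 1 n).
Proof.
apply: (@eq_from_nth _ 0%N); first by rewrite size_rev size_map.
move=> i; rewrite size_rev size_iota => hi.
rewrite nth_rev ?size_iota // (nth_map 0%N) ?size_iota // !nth_iota //; lia.
Qed.

Lemma Lp_rev p k : (0 < p * k)%N ->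
  rev (Lp p k) = map (fun j => p * k - j)%N (Lp p k).
Proof.
move=> K0; rewrite /Lp /index_iota -filter_rev rev_iota1.
have -> : (p * k - 1).+1 = p * k by lia.
rewrite filter_map; congr map; apply: eq_in_filter => j.
rewrite mem_iota => /andP[lo hi] /=.
by rewrite dvdn_subr ?dvdn_mulr //; lia.
Qed.

Lemma Lp_even p k : prime p -> (0 < k)%N -> (p != 2%N) || ~~ odd k ->
  ~~ odd (size (Lp p k)).
Proof.
move=> hp k0 hc; apply/negP => hodd.
have p0 := prime_gt0 hp.
have K0 : (0 < p * k)%N by rewrite muln_gt0 p0.
set n := size (Lp p k).
set h := n./2.
have hn : n = (h.*2).+1 by rewrite /h -{1}(odd_double_half n) hodd add1n.
have hh : (h < n)%N by lia.
have := congr1 (nth 0%N ^~ h) (Lp_rev K0).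
rewrite nth_rev // (nth_map 0%N) // -/n.
have -> : (n - h.+1 = h)%N by lia.
set x := nth 0%N (Lp p k) h => Hx.
have : x \in Lp p k by apply: mem_nth.
rewrite mem_filter mem_index_iota => /andP[ndx /andP[lo hi]].
have K2 : (p * k = 2 * x)%N by lia.
case: (even_prime hp) => [p2 | op].
  have ek : ~~ odd k by move: hc; rewrite p2.
  move: K2 ndx; rewrite p2 => /eqP; rewrite eqn_pmul2l // => /eqP <-.
  by rewrite dvdn2 ek.
have pn2 : p != 2%N by apply/eqP => p2; rewrite p2 in op.
have : (p %| 2 * x)%N by rewrite -K2 dvdn_mulr.
rewrite Euclid_dvdM // (negbTE ndx) orbF dvdn_prime2 //.
by rewrite (negbTE pn2).
Qed.

Lemma Lp_pair p k (F : nat -> int) : prime p -> (0 < k)%N -> (p != 2%N) || ~~ odd k ->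
  \prod_(j <- Lp p k) F j =
  \prod_(x <- take (size (Lp p k))./2 (Lp p k)) (F x * F (p * k - x)%N).
Proof.
move=> hp k0 hc.
have p0 := prime_gt0 hp.
have K0 : (0 < p * k)%N by rewrite muln_gt0 p0.
have ev := Lp_even hp k0 hc.
set s := Lp p k in ev *.
set h := (size s)./2.
have hn : size s = h.*2 by rewrite /h -{1}(odd_double_half (size s)) (negbTE ev) add0n.
have hd : drop h s = rev (map (fun j => p * k - j)%N (take h s)).
  rewrite map_take -Lp_rev // take_rev revK; congr drop; rewrite -/s hn; lia.
rewrite -{1}(@cat_take_drop h _ s) big_cat /= hd big_rev big_map big_split.
by [].
Qed.

Lemma prod_cong (T : seq nat) (f g : nat -> int) (d : int) :
  (forall x, x \in T -> (d %| f x - g x)%Z) ->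
  (d %| \prod_(x <- T) f x - \prod_(x <- T) g x)%Z.
Proof.
elim: T => [|a T IH] H; first by rewrite !big_nil subrr dvdz0.
rewrite !big_cons.
have -> : f a * \prod_(j <- T) f j - g a * \prod_(j <- T) g j =
  f a * (\prod_(j <- T) f j - \prod_(j <- T) g j) + (f a - g a) * \prod_(j <- T) g j
  by ring.
apply: rpredD; first by apply: dvdz_mull; apply: IH => x xT; apply: H; rewrite inE xT orbT.
by apply: dvdz_mulr; apply: H; rewrite inE eqxx.
Qed.

Lemma split_all (F : nat -> int) p k : (0 < p)%N ->
  \prod_(1 <= j < (p * k)%N) F j = \prod_(1 <= i < k) F (p * i)%N * \prod_(j <- Lp p k) F j.
Proof.
move=> p0; rewrite (bigID (fun j => (p %| j)%N)) /= mult_split // /Lp big_filter //.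
Qed.

Lemma pmul_prod (G : nat -> int) (q : int) k :
  \prod_(1 <= i < k) (q * G i) = q ^+ (k - 1) * \prod_(1 <= i < k) G i.
Proof. by rewrite big_split prodr_const_nat. Qed.

Definition Bk (N : int) (k : nat) := binz (k%:Z * N - 1) k.-1.
Definition Dp p k := \prod_(j <- Lp p k) (j%:Z).
Definition Ep (N : int) p k := \prod_(j <- Lp p k) (((p * k)%N)%:Z * N - j%:Z).

Lemma core_eq (N : int) p k : prime p -> (0 < k)%N ->
  Bk N (p * k)%N * Dp p k = Bk N k * Ep N p k.
Proof.
move=> hp k0; have p0 := prime_gt0 hp.
have K0 : (0 < p * k)%N by rewrite muln_gt0 p0.
have Z0 : (p%:Z ^+ (k - 1) * ((k.-1)`!)%:Z) != 0.
  rewrite mulf_neq0 // ?expf_neq0 // -lt0n ?fact_gt0 //; lia.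
apply: (mulIf Z0).
have H1 := binz_mul (((p*k)%N)%:Z * N - 1) (p*k).-1.
rewrite shift_prod split_all // in H1.
have H2 := binz_mul (k%:Z * N - 1) k.-1; rewrite shift_prod in H2.
have H3 := fact_shift K0; rewrite split_all // in H3.
have H4 := fact_shift k0.
have H5 : \prod_(1 <= i < k) (((p*k)%N)%:Z * N - ((p*i)%N)%:Z)
    = p%:Z ^+ (k - 1) * \prod_(1 <= i < k) (k%:Z * N - i%:Z).
  by rewrite -pmul_prod; apply: eq_bigr => i _; rewrite !PoszM; ring.
have H6 : \prod_(1 <= i < k) (((p*i)%N)%:Z)
    = p%:Z ^+ (k - 1) * \prod_(1 <= i < k) (i%:Z).
  by rewrite -pmul_prod; apply: eq_bigr => i _; rewrite !PoszM.
rewrite /Bk /Ep /Dp.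
transitivity (binz (((p*k)%N)%:Z * N - 1) (p*k).-1 * (((p * k).-1)`!)%:Z).
  by rewrite H3 H6 -H4; ring.
rewrite H1 H5 -H2; ring.
Qed.

Lemma core_cong (N : int) p k : prime p -> (0 < k)%N -> (p != 2%N) || ~~ odd k ->
  (((p * k)%N)%:Z ^+ 2 %| Ep N p k - Dp p k)%Z.
Proof.
move=> hp k0 hc.
rewrite /Ep /Dp !(Lp_pair _ hp k0 hc); apply: prod_cong => x.
move/mem_take; rewrite mem_filter mem_index_iota => /andP[_ /andP[_ hx]].
have -> : ((p * k - x)%N)%:Z = ((p * k)%N)%:Z - x%:Z by lia.
apply/dvdzP; exists (N ^+ 2 - N); ring.
Qed.

Lemma core (N : int) p k : prime p -> (0 < k)%N -> (p != 2%N) || ~~ odd k ->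
  (((p * k)%N)%:Z ^+ 2 %| (Bk N (p * k)%N - Bk N k) * Dp p k)%Z.
Proof.
move=> hp k0 hc.
have -> : (Bk N (p * k)%N - Bk N k) * Dp p k = Bk N k * (Ep N p k - Dp p k).
  by rewrite mulrBl core_eq // mulrBr.
by apply: dvdz_mull; apply: core_cong.
Qed.

Lemma Dp_coprime p k e : prime p -> (0 < e)%N -> coprimez (p ^ e)%N%:Z (Dp p k).
Proof.
move=> hp e0.
have -> : Dp p k = (\prod_(j <- Lp p k) j)%N%:Z.
  by rewrite /Dp (big_morph Posz PoszM (erefl _)).
rewrite coprimezE !absz_nat coprime_pexpl //.
rewrite big_seq; elim/big_ind: _ => //; first by rewrite coprimen1.
  by move=> x y hx hy; rewrite coprimeMr hx hy.
by move=> j; rewrite mem_filter prime_coprime // => /andP[].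
Qed.

Lemma omega_pR p R : prime p -> (0 < R)%N -> ~~ (p %| R)%N ->
  omega (p * R)%N = (omega R).+1.
Proof.
move=> hp R0 nd; rewrite /omega.
have hperm : perm_eq (primes (p * R)) (p :: primes R).
  apply: uniq_perm; first exact: primes_uniq.
    by rewrite /= primes_uniq mem_primes hp R0 (negbTE nd).
  move=> q; rewrite inE !mem_primes muln_gt0 prime_gt0 // R0 /=.
  case hq: (prime q) => /=; last first.
    by rewrite orbF; apply/esym/eqP => qp; rewrite qp hp in hq.
  rewrite Euclid_dvdM // dvdn_prime2 //.
by rewrite (perm_size hperm).
Qed.

Lemma lemma3p3_aux (w s t p a : nat)
  (hw : (0 < w)%N) (hs : (0 < s)%N) (ht : (0 < t)%N)
  (hts : (t %| s)%N) (hneq : t != s)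
  (hp : prime p) (ha : (0 < a)%N)
  (hpa : (p ^ a %| s %/ t)%N) (hpa1 : ~~ (p ^ a.+1 %| s %/ t)%N)
  (hp2 : p != 2%N \/ (1 < a)%N) :
  forall l : nat, inI (s %/ (p ^ a * t)) l ->
    ((p ^ (2 * a))%:Z %| fsum s t w p a l)%Z.
Proof.
move=> l [l0 [ldiv _]].
case: a ha hpa hpa1 hp2 ldiv => [//|a] _ hpa hpa1 hp2 ldiv.
have p0 := prime_gt0 hp.
set k := (p ^ a * l)%N.
have k0 : (0 < k)%N by rewrite muln_gt0 expn_gt0 p0 l0.
have hk2 : (p ^ a.+1 * l = p * k)%N by rewrite expnS mulnA.
have kdef : k = (p ^ a * l)%N by [].
clearbody k.
have hoddk : p = 2%N -> ~~ odd k.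
  move=> p2; case: hp2 => [|a1]; first by rewrite p2.
  by rewrite kdef oddM oddX p2 /=; have -> : (a == 0%N) = false by lia.
have hc : (p != 2%N) || ~~ odd k.
  case: (even_prime hp) => [p2|op]; first by rewrite hoddk ?orbT.
  by apply/orP; left; apply/eqP => p2; rewrite p2 in op.
have hodd : odd (p * k * t * w) = odd (k * t * w).
  case: (even_prime hp) => [p2|op].
    by rewrite -!mulnA (oddM p) (oddM k) (negbTE (hoddk p2)) p2.
  by rewrite -!mulnA oddM op.
set Q := (s %/ (p ^ a.+1 * t))%N in ldiv.
have hd : (p ^ a.+1 * t %| s)%N by rewrite -(divnK hts) dvdn_mul.
have hsQ : s = (Q * (p ^ a.+1 * t))%N by rewrite divnK.
set R := (Q %/ l)%N.
have hQ : Q = (R * l)%N by rewrite divnK.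
have hs1 : s = (R * (p * k * t))%N by rewrite hsQ hQ -hk2; ring.
have hs2 : s = ((p * R) * (k * t))%N by rewrite hsQ hQ kdef expnS; ring.
have hkt : (0 < k * t)%N by rewrite muln_gt0 k0 ht.
have hpkt : (0 < p * k * t)%N by rewrite !muln_gt0 k0 ht p0.
have R0 : (0 < R)%N by move: hs; rewrite hs1 muln_gt0 => /andP[].
have hst : (s %/ t = R * l * p ^ a.+1)%N.
  by rewrite hsQ hQ mulnA mulnK //; ring.
have nd : ~~ (p %| R)%N.
  apply/negP => pR; move: hpa1; rewrite hst expnS => /negP; apply.
  by apply: dvdn_mul => //; apply: dvdn_mulr.
have hom1 : omega (s %/ (k * t))%N = (omega (s %/ (p * k * t))%N).+1.
  by rewrite {1}hs2 mulnK // {1}hs1 mulnK // omega_pR.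
rewrite /fsum /= hk2 /fterm -kdef hom1 -(signr_odd _ (p * k * t * w)) hodd signr_odd.
set om := omega _.
set sg := (-1) ^+ (k * t * w).
set N := (t * w)%:Z - 1.
have -> : (-1) ^+ om.+1 * sg * binz (k%:Z * N - 1) k.-1 +
    (-1) ^+ om * sg * binz (((p * k)%N)%:Z * N - 1) (p * k).-1
  = ((-1) ^+ om * sg) * (Bk N (p * k)%N - Bk N k).
  by rewrite /Bk exprS; ring.
apply: dvdz_mull.
have hcop := Dp_coprime k hp (isT : (0 < 2 * a.+1)%N).
rewrite -(Gauss_dvdzl _ hcop).
apply: dvdz_trans (core N hp k0 hc).
apply/dvdzP; exists (l%:Z ^+ 2).
by rewrite -hk2 -!natz -!natrX -natrM; congr (_%:R); rewrite expnMn -expnM mulnC (mulnC a.+1).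
Qed.

Local Close Scope ring_scope.

Theorem lemma3p3 (w s t p a : nat)
  (hw : (0 < w)%N) (hs : (0 < s)%N) (ht : (0 < t)%N)
  (hts : (t %| s)%N) (hneq : t != s)
  (hp : prime p) (ha : (0 < a)%N)
  (hpa : (p ^ a %| s %/ t)%N) (hpa1 : ~~ (p ^ a.+1 %| s %/ t)%N)
  (hp2 : p != 2%N \/ (1 < a)%N) :
  forall l : nat, inI (s %/ (p ^ a * t)) l ->
    ((p ^ (2 * a))%:Z %| fsum s t w p a l)%Z.
Proof. exact: lemma3p3_aux. Qed.
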